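(* Let $q\equiv0\pmod3$ and $\mu\in\mathbb F_q^*\setminus\{1\}$. Then $\widetilde N_1(\mu)=\#\left\{c\in\mathbb F_q^*:\ \mu c^4+c^2+1\ne0,\ \eta\!\left(\dfrac{c^4}{\mu c^4+c^2+1}\right)=-1\right\}.$
   Context: $\eta$ is the quadratic character of $\mathbb F_q$: $\eta(a)=1$ if $a$ is a nonzero square, $\eta(a)=-1$ if $a$ is a non-square, $\eta(0)=0$. $\widetilde N_1(\mu)$ is the number of $c\in\mathbb F_q^*$ such that $t^3+ct^2-t-\mu c=0$ has exactly one solution $t\in\mathbb F_q$. *)

(* Defs.v *)
From HB Require Import structures.
From mathcomp Require Import all_boot all_order all_algebra all_field.
Set Implicit Arguments. Unset Strict Implicit. Unset Printing Implicit Defensive.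
Import GRing.Theory.
Local Open Scope ring_scope.

Definition quad_char (F : finFieldType) (a : F) : int :=
  if a == 0 then (0 : int)
  else if [exists b : F, b ^+ 2 == a] then (1 : int) else (-1 : int).

Definition Ntilde1 (F : finFieldType) (mu : F) : nat :=
  #|[set c : F | (c != 0) &&
      (#|[set t : F | t ^+ 3 + c * t ^+ 2 - t - mu * c == 0]| == 1%N)]|.

(* Main.v *)
Require Import Defs.
From HB Require Import structures.
From mathcomp Require Import all_boot all_order all_algebra all_field.
From mathcomp Require Import ring.
Import GRing.Theory.
Local Open Scope ring_scope.

Lemma char3 (F : finFieldType) : (3 %| #|F|)%N -> (3%:R : F) = 0.
Proof.
move=> h3.
have [p pr_p chp] := finPcharP F.
have cF : #|F| = (p ^ logn p #|F|)%N := card_pprimeChar chp.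
move: h3; rewrite cF Euclid_dvdX // dvdn_prime2 // => /andP[/eqP -> _].
exact: pcharf0 chp.
Qed.

Section S.
Variable F : finFieldType.
Hypothesis h3 : (3%:R : F) = 0.

Lemma cube_sub (x y : F) : (x - y) ^+ 3 = x ^+ 3 - y ^+ 3.
Proof.
transitivity (x ^+ 3 - y ^+ 3 - 3%:R * (x^+2 * y - x * y^+2)); first ring.
by rewrite h3 mul0r subr0.
Qed.

Lemma cube_add (x y : F) : (x + y) ^+ 3 = x ^+ 3 + y ^+ 3.
Proof.
transitivity (x ^+ 3 + y ^+ 3 + 3%:R * (x^+2 * y + x * y^+2)); first ring.
by rewrite h3 mul0r addr0.
Qed.

Definition L (k w : F) := w ^+ 3 - k * w.

Lemma L_sub k x y : L k (x - y) = L k x - L k y.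
Proof. rewrite /L cube_sub; ring. Qed.

Lemma count_nonsq (k B : F) : ~~ [exists b : F, b ^+ 2 == k] ->
  #|[set w : F | w ^+ 3 - k * w - B == 0]| = 1%N.
Proof.
move=> nsq.
have Linj : injective (L k).
  move=> x y /eqP; rewrite -subr_eq0 -L_sub /L => /eqP H.
  have : (x - y) * ((x - y) ^+ 2 - k) = 0 by rewrite -H; ring.
  move/eqP; rewrite mulf_eq0 subr_eq0 => /orP[/eqP //|].
  rewrite subr_eq0 => /eqP e; case/negP: nsq; apply/existsP; exists (x - y).
  by rewrite e.
transitivity #|[set B]|; last exact: cards1.
rewrite -(card_preimset [set B] Linj); apply: eq_card => w.
by rewrite !inE /L subr_eq0.
Qed.

Lemma count_sq (k B b : F) : b != 0 -> b ^+ 2 = k ->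
  #|[set w : F | w ^+ 3 - k * w - B == 0]| != 1%N.
Proof.
move=> b0 bk; apply/negP => /cards1P [w0 Hs].
have : w0 \in [set w : F | w ^+ 3 - k * w - B == 0] by rewrite Hs set11.
rewrite inE => /eqP H0.
have : w0 - b \in [set w : F | w ^+ 3 - k * w - B == 0].
  rewrite inE cube_sub -H0 -bk; apply/eqP; ring.
rewrite Hs inE -subr_eq0 addrAC subrr add0r oppr_eq0 (negbTE b0) //.
Qed.

Variable mu : F.
Definition fc (c t : F) := t ^+ 3 + c * t ^+ 2 - t - mu * c.
Definition Dc (c : F) := mu * c ^+ 4 + c ^+ 2 + 1.

Lemma key c t : c ^+ 3 * fc c t = (c * t + 1) ^+ 3 + c ^+ 2 * (c * t + 1) ^+ 2 - Dc c.
Proof.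
transitivity ((c * t + 1) ^+ 3 + c ^+ 2 * (c * t + 1) ^+ 2 - Dc c
   - 3%:R * (c^+3 * t + c^+2 * t^+2 + c * t)); first by rewrite /fc /Dc; ring.
by rewrite h3 mul0r subr0.
Qed.

Lemma roots_equiv c : c != 0 -> Dc c != 0 ->
  #|[set t | fc c t == 0]| =
  #|[set w : F | w ^+ 3 - (c ^+ 4 / Dc c) * w - c ^+ 3 / Dc c == 0]|.
Proof.
move=> c0 D0.
pose phi t := c / (c * t + 1).
have phiinj : injective phi.
  move=> t1 t2; rewrite /phi.
  have [u1|u1] := eqVneq (c * t1 + 1) 0; have [u2|u2] := eqVneq (c * t2 + 1) 0.
  - by move=> _; apply: (mulfI c0); apply: (addIr 1); rewrite u1 u2.
  - rewrite u1 invr0 mulr0 => /esym /eqP; rewrite mulf_eq0 invr_eq0 (negbTE c0) (negbTE u2) //.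
  - rewrite u2 invr0 mulr0 => /eqP; rewrite mulf_eq0 invr_eq0 (negbTE c0) (negbTE u1) //.
  - move/(mulfI c0)/invr_inj/(addIr 1); exact: (mulfI c0).
symmetry; rewrite -(card_preimset _ phiinj); apply: eq_card => t; rewrite !inE /phi; symmetry.
have c3 : c ^+ 3 != 0 by rewrite expf_neq0.
have [u0|u0] := eqVneq (c * t + 1) 0.
  rewrite u0 invr0 mulr0 expr0n /= mulr0 subrr sub0r oppr_eq0 mulf_eq0 invr_eq0 (negbTE c3) (negbTE D0).
  apply/negbTE; apply: contra D0 => /eqP f0.
  have := key c t; rewrite f0 mulr0 u0 !expr0n /= mulr0 add0r sub0r => /eqP.
  by rewrite eq_sym oppr_eq0.
have E : (c / (c * t + 1)) ^+ 3 - c ^+ 4 / Dc c * (c / (c * t + 1)) - c ^+ 3 / Dc c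
   = - (c ^+ 3 * fc c t) * (c ^+ 3 / (Dc c * (c * t + 1) ^+ 3)).
  rewrite key; field; rewrite D0 u0 //.
rewrite E mulf_eq0 oppr_eq0 mulf_eq0 (negbTE c3) /=.
have -> : (c ^+ 3 / (Dc c * (c * t + 1) ^+ 3) == 0) = false.
  by apply/negbTE; rewrite mulf_neq0 // invr_neq0 // mulf_neq0 // expf_neq0.
by rewrite orbF.
Qed.

Lemma D0case c : c != 0 -> Dc c = 0 -> #|[set t | fc c t == 0]| != 1%N.
Proof.
move=> c0 D0; apply/negP => /cards1P [t0 Hs].
have c3 : c ^+ 3 != 0 by rewrite expf_neq0.
have root t : (c * t + 1) ^+ 3 + c ^+ 2 * (c * t + 1) ^+ 2 = 0 -> t = t0.
  move=> H; apply/set1P; rewrite -Hs inE; apply/eqP; apply: (mulfI c3).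
  by rewrite key D0 subr0 mulr0 H.
have e1 : - c^-1 = t0.
  apply: root; rewrite mulrN mulfV // addNr !expr0n /= mulr0 addr0 //.
have e2 : - c^-1 - c = t0.
  apply: root; have -> : c * (- c^-1 - c) + 1 = - c ^+ 2 by field.
  ring.
move: e2; rewrite -e1 -{2}[- c^-1]subr0 => /addrI /eqP; rewrite oppr0 oppr_eq0 (negbTE c0) //.
Qed.

End S.

Theorem lemma8p3 (F : finFieldType) (mu : F) :
  (3 %| #|F|)%N -> mu != 0 -> mu != 1 ->
  Ntilde1 mu =
  #|[set c : F | [&& c != 0,
                    mu * c ^+ 4 + c ^+ 2 + 1 != 0 &
                    quad_char (c ^+ 4 / (mu * c ^+ 4 + c ^+ 2 + 1)) == -1]]|.
Proof.
move=> h3' mu0 mu1; have h3 := @char3 F h3'.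
rewrite /Ntilde1; apply: eq_card => c; rewrite !inE.
have [->|c0] := eqVneq c 0; first by [].
rewrite /=.
have -> : [set t : F | t ^+ 3 + c * t ^+ 2 - t - mu * c == 0] = [set t | @fc F mu c t == 0] by [].
have -> : mu * c ^+ 4 + c ^+ 2 + 1 = @Dc F mu c by [].
have [D0|D0] := eqVneq (@Dc F mu c) 0.
  by rewrite (negbTE (@D0case F h3 mu c c0 D0)).
rewrite /= (@roots_equiv F h3 mu c c0 D0) /quad_char.
have k0 : c ^+ 4 / @Dc F mu c != 0 by rewrite mulf_neq0 ?invr_eq0 ?expf_neq0.
rewrite (negbTE k0).
case: existsP => [[b /eqP hb]|nb].
  have b0 : b != 0 by apply: contraNneq k0 => b0; rewrite -hb b0 expr0n.
  by rewrite (negbTE (@count_sq F h3 _ _ _ b0 hb)).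
rewrite (@count_nonsq F h3) //; apply/existsP; exact: nb.
Qed.
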